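(* Let $\|\cdot\|_X$ be a strictly convex norm on $X=\mathbb{R}^2$. Let $x,y,z\in S_X$ and $\lambda\in\,]0,2[$ satisfy $z=y+\lambda x$, and assume $\|\cdot\|_X$ is differentiable at $z$. Then $\|\cdot\|_X$ is differentiable at $x$ if and only if the function $G:\mathbb{R}\to\mathbb{R}$, $G(t)=\|\gamma_z(t)-y\|_X$, is differentiable at $t=0$.
   Context: Fix the anticlockwise orientation of $\mathbb{R}^2$. For a point $z$ on a convex, piecewise $C^1$ Jordan curve $C\subset X$ of $\|\cdot\|_X$-length $L$ (here $C=S_X$), $\gamma_z:\mathbb{R}\to C$ denotes the natural (arc-length) parameterization: the unique anticlockwise, $L$-periodic map with $\gamma_z(0)=z$, injective on $[0,L)$, having one-sided derivatives $\gamma'_{z,-}(t),\gamma'_{z,+}(t)$ at every $t$ with $\|\gamma'_{z,-}(t)\|_X=\|\gamma'_{z,+}(t)\|_X=1$. A norm is strictly convex if its unit sphere contains no nontrivial segment. *)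

(* Defs.v *)
(* The plane X = R^2 is modelled as R * R (Coquelicot's product normed module;
   its built-in norm is only used for the topology, which is the same for all
   norms on R^2). *)
From Stdlib Require Import Reals Lra List Sorted.
From Coquelicot Require Import Coquelicot.
Open Scope R_scope.

Record is_norm (N : R * R -> R) : Prop := {
  norm_definite : forall u : R * R, N u = 0 -> u = (0, 0);
  norm_homogeneous : forall (a : R) (u : R * R), N (scal a u) = Rabs a * N u;
  norm_triangle : forall u v : R * R, N (plus u v) <= N u + N v
}.

Definition strictly_convex (N : R * R -> R) : Prop :=
  forall u v : R * R, N u = 1 -> N v = 1 ->
    (forall s, 0 <= s <= 1 -> N (plus (scal (1 - s) u) (scal s v)) = 1) ->
    u = v.

Definition det (u v : R * R) : R := fst u * snd v - snd u * fst v.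

Definition right_deriv (g : R -> R * R) (t : R) (d : R * R) : Prop :=
  filterlim (fun h => scal (/ h) (minus (g (t + h)) (g t))) (at_right 0) (locally d).
Definition left_deriv (g : R -> R * R) (t : R) (d : R * R) : Prop :=
  filterlim (fun h => scal (/ h) (minus (g (t + h)) (g t))) (at_left 0) (locally d).

Fixpoint poly_len (N : R * R -> R) (g : R -> R * R) (l : list R) : R :=
  match l with
  | a :: ((b :: _) as tl) => N (minus (g b) (g a)) + poly_len N g tl
  | _ => 0
  end.

Definition partition (a b : R) (l : list R) : Prop :=
  hd 0 l = a /\ last l 0 = b /\ Sorted Rle l.

Definition curve_length (N : R * R -> R) (g : R -> R * R) (a b Lg : R) : Prop :=
  is_lub (fun s => exists l, partition a b l /\ s = poly_len N g l) Lg.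

(** g is the natural (arc-length) parameterization gamma_z of the unit sphere
    S_X = {p | N p = 1}, of N-length L:  anticlockwise, L-periodic, g 0 = z,
    a bijection from [0,L) onto S_X, with one-sided derivatives of N-norm 1
    everywhere.  Anticlockwise orientation (about the origin, which lies in the
    interior of S_X) is expressed by det(g t, g'_(+/-)(t)) > 0. *)
Definition natural_param (N : R * R -> R) (z : R * R) (L : R) (g : R -> R * R) : Prop :=
  0 < L /\
  g 0 = z /\
  (forall t, g (t + L) = g t) /\
  (forall t, N (g t) = 1) /\
  (forall p, N p = 1 -> exists t, 0 <= t < L /\ g t = p) /\
  (forall s t, 0 <= s < L -> 0 <= t < L -> g s = g t -> s = t) /\
  curve_length N g 0 L L /\
  (forall t, exists dm dp,
      left_deriv g t dm /\ right_deriv g t dp /\ N dm = 1 /\ N dp = 1 /\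
      0 < det (g t) dm /\ 0 < det (g t) dp).

(* Main.v *)
Require Import Defs.
From Stdlib Require Import Reals Lra.
From Coquelicot Require Import Coquelicot.
Open Scope R_scope.

Lemma Nscal N : is_norm N -> forall a u1 u2, N (a*u1, a*u2) = Rabs a * N (u1,u2).
Proof. intros HN a u1 u2. exact (Defs.norm_homogeneous N HN a (u1,u2)). Qed.
Lemma Ntri N : is_norm N -> forall u1 u2 v1 v2, N (u1+v1, u2+v2) <= N (u1,u2) + N (v1,v2).
Proof. intros HN u1 u2 v1 v2. exact (Defs.norm_triangle N HN (u1,u2) (v1,v2)). Qed.
Lemma N00 N : is_norm N -> N (0,0) = 0.
Proof. intros HN. replace (0,0) with (0*0,0*0) by (f_equal; ring).
rewrite Nscal; auto. rewrite Rabs_R0; ring. Qed.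
Lemma Nopp N : is_norm N -> forall u1 u2, N (-u1,-u2) = N (u1,u2).
Proof. intros HN u1 u2. replace (-u1,-u2) with (-1*u1,-1*u2) by (f_equal; ring).
rewrite Nscal; auto. rewrite Rabs_m1; ring. Qed.
Lemma Nnonneg N : is_norm N -> forall u1 u2, 0 <= N (u1,u2).
Proof. intros HN u1 u2. pose proof (Ntri N HN u1 u2 (-u1) (-u2)).
rewrite Nopp in H; auto. replace (u1 + - u1, u2 + - u2) with (0,0) in H by (f_equal; ring).
rewrite N00 in H; auto. lra. Qed.
Lemma Ncomb N : is_norm N -> forall p q u1 u2 v1 v2, 0 <= p -> 0 <= q ->
  N (p*u1 + q*v1, p*u2+q*v2) <= p * N (u1,u2) + q * N (v1,v2).
Proof. intros HN p q u1 u2 v1 v2 Hp Hq. eapply Rle_trans. apply Ntri; auto.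
rewrite !Nscal, !Rabs_pos_eq; auto; lra. Qed.
Definition KN N := N (1,0) + N (0,1).
Lemma Nbound N : is_norm N -> forall u1 u2, N (u1,u2) <= KN N * (Rabs u1 + Rabs u2).
Proof. intros HN u1 u2. unfold KN.
replace (u1,u2) with (u1*1 + u2*0, u1*0+u2*1) by (f_equal; ring).
eapply Rle_trans. apply Ntri; auto. rewrite !Nscal; auto.
pose proof (Nnonneg N HN 1 0). pose proof (Nnonneg N HN 0 1).
pose proof (Rabs_pos u1). pose proof (Rabs_pos u2). nra. Qed.
Lemma Ndiff N : is_norm N -> forall u1 u2 v1 v2,
  Rabs (N (u1,u2) - N (v1,v2)) <= KN N * (Rabs (u1 - v1) + Rabs (u2 - v2)).
Proof. intros HN u1 u2 v1 v2.
pose proof (Ntri N HN (u1-v1) (u2-v2) v1 v2).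
pose proof (Ntri N HN (v1-u1) (v2-u2) u1 u2).
replace (u1 - v1 + v1, u2 - v2 + v2) with (u1,u2) in H by (f_equal;ring).
replace (v1 - u1 + u1, v2 - u2 + u2) with (v1,v2) in H0 by (f_equal;ring).
replace (v1-u1,v2-u2) with (-(u1-v1), -(u2-v2)) in H0 by (f_equal;ring).
rewrite Nopp in H0; auto. pose proof (Nbound N HN (u1-v1) (u2-v2)).
apply Rabs_le; lra. Qed.
Lemma Npos N : is_norm N -> forall u1 u2, N (u1,u2) = 0 -> u1 = 0 /\ u2 = 0.
Proof. intros HN u1 u2 H. apply (Defs.norm_definite N HN) in H. inversion H; auto. Qed.


Lemma norm_pair_le u1 u2 : norm (u1,u2) <= Rabs u1 + Rabs u2.
Proof. change (norm (u1,u2)) with (sqrt (Rabs u1 ^2 + Rabs u2^2)).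
pose proof (Rabs_pos u1); pose proof (Rabs_pos u2).
rewrite <- (sqrt_pow2 (Rabs u1 + Rabs u2)) by lra.
apply sqrt_le_1_alt. nra. Qed.
Lemma norm_pair_ge u1 u2 : Rabs u1 + Rabs u2 <= 2 * norm (u1,u2).
Proof. change (norm (u1,u2)) with (sqrt (Rabs u1 ^2 + Rabs u2^2)).
destruct (sqrt_plus_sqr (Rabs u1) (Rabs u2)) as [H _].
rewrite !Rabs_Rabsolu in H.
pose proof (Rmax_l (Rabs u1) (Rabs u2)); pose proof (Rmax_r (Rabs u1) (Rabs u2)). lra. Qed.

Definition Fdiff (N : R*R -> R) p1 p2 a b := forall eps, 0 < eps -> exists del, 0 < del /\
  forall h1 h2, Rabs h1 + Rabs h2 < del ->
  Rabs (N (p1+h1,p2+h2) - N (p1,p2) - (a*h1+b*h2)) <= eps * (Rabs h1 + Rabs h2).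

Lemma fd_to_F N p1 p2 : ex_filterdiff N (locally (p1,p2)) -> exists a b, Fdiff N p1 p2 a b.
Proof.
intros [l [Hl Hd]].
assert (Hl2 : forall h1 h2, l (h1,h2) = h1 * l (1,0) + h2 * l (0,1)).
{ intros h1 h2. replace (h1,h2) with (plus (scal h1 (1,0)) (scal h2 ((0,1) : R*R))).
  rewrite (linear_plus l Hl), !(linear_scal l Hl). reflexivity.
  unfold plus, scal; simpl. unfold prod_plus, prod_scal; simpl.
  unfold plus, scal; simpl. unfold mult; simpl. f_equal; ring. }
exists (l (1,0)), (l (0,1)). intros eps Heps.
assert (Hp : is_filter_lim (locally (p1,p2)) (p1,p2)) by (intros P HP; exact HP).
destruct (Hd _ Hp (mkposreal (eps/2) ltac:(lra))) as [del Hdel].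
exists del. split. apply cond_pos. intros h1 h2 Hh.
assert (Hb : ball (p1,p2) del (p1+h1,p2+h2)).
{ split; simpl; unfold ball; simpl; unfold AbsRing_ball, abs, minus, plus, opp; simpl;
  pose proof (Rabs_pos h1); pose proof (Rabs_pos h2).
  replace (p1 + h1 + - p1) with h1 by ring. lra.
  replace (p2 + h2 + - p2) with h2 by ring. lra. }
specialize (Hdel _ Hb). simpl in Hdel.
change (minus (p1 + h1, p2 + h2) (p1, p2)) with (p1 + h1 + - p1, p2 + h2 + - p2) in Hdel.
replace (p1 + h1 + - p1) with h1 in Hdel by ring.
replace (p2 + h2 + - p2) with h2 in Hdel by ring.
rewrite Hl2 in Hdel.
pose proof (norm_pair_le h1 h2). pose proof (norm_ge_0 (h1,h2)).
change (norm (minus (minus (N (p1 + h1, p2 + h2)) (N (p1, p2))) (h1 * l (1, 0) + h2 * l (0, 1))))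
  with (Rabs (N (p1 + h1, p2 + h2) - N (p1, p2) - (h1 * l (1, 0) + h2 * l (0, 1)))) in Hdel.
replace (l (1,0) * h1 + l (0,1) * h2) with (h1 * l (1, 0) + h2 * l (0, 1)) by ring.
apply Rle_trans with (eps/2 * norm (h1,h2)); [exact Hdel|]. pose proof (Rabs_pos h1). pose proof (Rabs_pos h2). apply Rle_trans with (eps/2*(Rabs h1+Rabs h2)); [apply Rmult_le_compat_l; [lra| apply norm_pair_le] | assert (0 <= Rabs h1 + Rabs h2) by lra; nra].
Qed.

Lemma F_to_fd N p1 p2 a b : Fdiff N p1 p2 a b -> ex_filterdiff N (locally (p1,p2)).
Proof.
intros HF. exists (fun h : R*R => a * fst h + b * snd h). split.
- split.
  + intros [x1 x2] [y1 y2]. simpl. unfold plus; simpl. unfold prod_plus; simpl. unfold plus; simpl. ring.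
  + intros k [x1 x2]. unfold scal; simpl. unfold prod_scal; simpl. unfold scal; simpl. unfold mult; simpl. ring.
  + exists (2*(Rabs a + Rabs b) + 1). split. pose proof (Rabs_pos a); pose proof (Rabs_pos b); lra.
    intros [x1 x2]. simpl. change (norm (a*x1+b*x2)) with (Rabs (a*x1+b*x2)).
    pose proof (norm_pair_ge x1 x2). pose proof (norm_ge_0 (x1,x2)).
    eapply Rle_trans. apply Rabs_triang. rewrite !Rabs_mult.
    pose proof (Rabs_pos a); pose proof (Rabs_pos b); pose proof (Rabs_pos x1); pose proof (Rabs_pos x2).
    pose proof (Rmult_le_compat_l (Rabs a) _ _ H1 H). pose proof (Rmult_le_compat_l (Rabs b) _ _ H2 H).
    nra.
- intros x Hx. apply (@is_filter_lim_locally_unique R_AbsRing (prod_NormedModule R_AbsRing R_NormedModule R_NormedModule)) in Hx. subst x.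
  intros eps. pose proof (cond_pos eps) as Heps. destruct (HF (eps/2) ltac:(lra)) as [del [Hdel H]].
  exists (mkposreal (del/2) ltac:(lra)). intros [y1 y2] [Hy1 Hy2]. change R in y1, y2.
  simpl in Hy1, Hy2. unfold ball in Hy1, Hy2; simpl in Hy1, Hy2.
  unfold AbsRing_ball, abs, minus, plus, opp in Hy1, Hy2; simpl in Hy1, Hy2.
  specialize (H (y1 + - p1) (y2 + - p2) ltac:(lra)).
  replace (p1 + (y1 + - p1), p2 + (y2 + - p2)) with (y1,y2) in H by (f_equal; ring).
  replace (minus (y1, y2) (p1, p2)) with (y1 + - p1, y2 + - p2).
  2:{ unfold minus, plus, opp; simpl. unfold prod_plus, prod_opp; simpl.
  unfold plus, opp; simpl. reflexivity. }
  change (norm (minus (minus (N (y1, y2)) (N (p1, p2))) (a * fst (y1 + - p1, y2 + - p2) + b * snd (y1 + - p1, y2 + - p2))))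
   with (Rabs (N (y1, y2) - N (p1, p2) - (a * (y1 + - p1) + b * (y2 + - p2)))).
  eapply Rle_trans. exact H.
  replace (eps / 2 * (Rabs (y1 + - p1) + Rabs (y2 + - p2))) with (eps * ((Rabs (y1 + - p1) + Rabs (y2 + - p2))/2)) by field.
  apply Rmult_le_compat_l. lra. apply (Rmult_le_reg_l 2); [lra|]. replace (2 * ((Rabs (y1 + - p1) + Rabs (y2 + - p2))/2)) with (Rabs (y1 + - p1) + Rabs (y2 + - p2)) by field. apply norm_pair_ge.
Qed.


Definition D1 (f : R -> R) c := forall eps, 0 < eps -> exists del, 0 < del /\
  forall t, Rabs t < del -> Rabs (f t - f 0 - c * t) <= eps * Rabs t.

Lemma exd_D1 f : ex_derive f 0 <-> exists c, D1 f c.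
Proof. split.
- intros [c Hc]. exists c. apply is_derive_Reals in Hc. intros eps Heps.
  destruct (Hc eps Heps) as [del Hd]. exists del. split. apply cond_pos.
  intros t Ht. destruct (Req_dec t 0) as [->|Ht0].
  + rewrite Rabs_R0. replace (f 0 - f 0 - c*0) with 0 by ring. rewrite Rabs_R0; lra.
  + specialize (Hd t Ht0 Ht). rewrite Rplus_0_l in Hd.
    replace (f t - f 0 - c * t) with (((f t - f 0)/t - c) * t) by (field; auto).
    rewrite Rabs_mult. apply Rmult_le_compat_r. apply Rabs_pos. lra.
- intros [c Hc]. exists c. apply is_derive_Reals. intros eps Heps.
  destruct (Hc (eps/2) ltac:(lra)) as [del [Hdel Hd]]. exists (mkposreal del Hdel).
  intros h Hh0 Hh. simpl in Hh. rewrite Rplus_0_l. specialize (Hd h Hh).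
  replace ((f h - f 0) / h - c) with ((f h - f 0 - c*h) / h) by (field; auto).
  unfold Rdiv. rewrite Rabs_mult, Rabs_inv. pose proof (Rabs_pos_lt h Hh0).
  apply (Rmult_lt_reg_r (Rabs h)); auto. rewrite Rmult_assoc, Rinv_l by lra. nra.
Qed.

Lemma fst_sm k (u v : R*R) : fst (scal k (minus u v)) = k * (fst u - fst v).
Proof. destruct u, v. reflexivity. Qed.
Lemma snd_sm k (u v : R*R) : snd (scal k (minus u v)) = k * (snd u - snd v).
Proof. destruct u, v. reflexivity. Qed.

Lemma right_o g d : right_deriv g 0 d -> forall eps, 0 < eps -> exists del, 0 < del /\
  forall t, 0 < t < del -> Rabs (fst (g t) - fst (g 0) - t * fst d) + Rabs (snd (g t) - snd (g 0) - t * snd d) <= eps * Rabs t.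
Proof. intros H eps Heps. unfold right_deriv in H. 
specialize (H (ball d (mkposreal (eps/2) ltac:(lra))) (locally_ball _ _)).
destruct H as [del Hd]. exists del. split. apply cond_pos.
intros t Ht. assert (Hb : ball 0 del t).
{ unfold ball; simpl. unfold AbsRing_ball, abs, minus, plus, opp; simpl. rewrite Ropp_0, Rplus_0_r, Rabs_pos_eq; lra. }
specialize (Hd t Hb ltac:(lra)). destruct Hd as [H1 H2].
unfold ball in H1, H2; simpl in H1, H2. unfold AbsRing_ball, abs, minus, plus, opp in H1, H2; simpl in H1, H2.
rewrite Rplus_0_l in H1, H2.
change (Rabs (/t * (fst (g t) - fst (g 0)) + - fst d) < eps/2) in H1.
change (Rabs (/t * (snd (g t) - snd (g 0)) + - snd d) < eps/2) in H2.
replace (fst (g t) - fst (g 0) - t * fst d) with (t * (/t * (fst (g t) - fst (g 0)) + - fst d)) by (field; lra).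
replace (snd (g t) - snd (g 0) - t * snd d) with (t * (/t * (snd (g t) - snd (g 0)) + - snd d)) by (field; lra).
rewrite !Rabs_mult, (Rabs_pos_eq t) by lra. simpl in H1, H2. nra.
Qed.

Lemma left_o g d : left_deriv g 0 d -> forall eps, 0 < eps -> exists del, 0 < del /\
  forall t, - del < t < 0 -> Rabs (fst (g t) - fst (g 0) - t * fst d) + Rabs (snd (g t) - snd (g 0) - t * snd d) <= eps * Rabs t.
Proof. intros H eps Heps. unfold left_deriv in H. 
specialize (H (ball d (mkposreal (eps/2) ltac:(lra))) (locally_ball _ _)).
destruct H as [del Hd]. exists del. split. apply cond_pos.
intros t Ht. assert (Hb : ball 0 del t).
{ unfold ball; simpl. unfold AbsRing_ball, abs, minus, plus, opp; simpl. rewrite Ropp_0, Rplus_0_r, Rabs_left; lra. }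
specialize (Hd t Hb ltac:(lra)). destruct Hd as [H1 H2].
unfold ball in H1, H2; simpl in H1, H2. unfold AbsRing_ball, abs, minus, plus, opp in H1, H2; simpl in H1, H2.
rewrite Rplus_0_l in H1, H2.
change (Rabs (/t * (fst (g t) - fst (g 0)) + - fst d) < eps/2) in H1.
change (Rabs (/t * (snd (g t) - snd (g 0)) + - snd d) < eps/2) in H2.
replace (fst (g t) - fst (g 0) - t * fst d) with (t * (/t * (fst (g t) - fst (g 0)) + - fst d)) by (field; lra).
replace (snd (g t) - snd (g 0) - t * snd d) with (t * (/t * (snd (g t) - snd (g 0)) + - snd d)) by (field; lra).
rewrite !Rabs_mult, (Rabs_left t) by lra. simpl in H1, H2. nra.
Qed.


Lemma lin_bound a b u1 u2 : Rabs (a*u1+b*u2) <= (Rabs a + Rabs b)*(Rabs u1 + Rabs u2).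
Proof. eapply Rle_trans. apply Rabs_triang. rewrite !Rabs_mult.
pose proof (Rabs_pos a); pose proof (Rabs_pos b); pose proof (Rabs_pos u1); pose proof (Rabs_pos u2). nra. Qed.

Lemma Rabs_le_inv a b : Rabs a <= b -> - b <= a <= b.
Proof. unfold Rabs; destruct (Rcase_abs a); lra. Qed.

Lemma subgrad N z1 z2 a b : is_norm N -> Fdiff N z1 z2 a b ->
  forall h1 h2, N (z1,z2) + (a*h1 + b*h2) <= N (z1+h1,z2+h2).
Proof.
intros HN HF h1 h2. apply Rnot_lt_le. intros Hlt.
set (w := a*h1+b*h2 - (N (z1+h1,z2+h2) - N (z1,z2))).
assert (Hw : 0 < w) by (unfold w; lra).
set (m := Rabs h1 + Rabs h2).
pose proof (Rabs_pos h1); pose proof (Rabs_pos h2).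
destruct (Req_dec m 0) as [Hm|Hm].
{ assert (h1 = 0) by (destruct (Rabs_pos h1); [unfold m in Hm; lra| apply eq_sym, Rabs_eq_0 in H1; auto]).
  assert (h2 = 0) by (destruct (Rabs_pos h2); [unfold m in Hm; lra| apply eq_sym, Rabs_eq_0 in H2; auto]).
  subst. unfold w in Hw. rewrite !Rplus_0_r in Hw. lra. }
assert (Hm0 : 0 < m) by (unfold m in *; lra).
destruct (HF (w/(2*m)) ltac:(apply Rdiv_lt_0_compat; lra)) as [del [Hdel Hd]].
set (s := Rmin 1 (del/(2*m))).
assert (Hs0 : 0 < s) by (unfold s; apply Rmin_pos; [lra| apply Rdiv_lt_0_compat; lra]).
assert (Hs1 : s <= 1) by apply Rmin_l.
assert (Hs2 : s <= del/(2*m)) by apply Rmin_r.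
assert (Hsm : s * m <= del/2).
{ apply Rmult_le_compat_r with (r := m) in Hs2; [|lra].
  replace (del/(2*m)*m) with (del/2) in Hs2 by (field; lra). lra. }
specialize (Hd (s*h1) (s*h2)).
rewrite !Rabs_mult, (Rabs_pos_eq s) in Hd by lra.
assert (Hlt2 : s * Rabs h1 + s * Rabs h2 < del) by (unfold m in Hsm; lra).
specialize (Hd Hlt2).
pose proof (Ncomb N HN (1-s) s z1 z2 (z1+h1) (z2+h2) ltac:(lra) ltac:(lra)) as Hc.
replace ((1 - s) * z1 + s * (z1 + h1), (1 - s) * z2 + s * (z2 + h2)) with (z1 + s*h1, z2 + s*h2) in Hc by (f_equal; ring).
apply Rabs_le_inv in Hd. destruct Hd as [Hd _].
assert (E : w / (2 * m) * (s * Rabs h1 + s * Rabs h2) = s * w / 2) by (unfold m in *; field; lra).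
rewrite E in Hd. assert (Hw' : N (z1+h1,z2+h2) = N (z1,z2) + (a*h1+b*h2) - w) by (unfold w; ring).
rewrite Hw' in Hc. pose proof (Rmult_lt_0_compat s w Hs0 Hw). nra.
Qed.

Lemma kernel N z1 z2 a b (g1 g2 : R -> R) d1 d2 : is_norm N -> Fdiff N z1 z2 a b ->
  (forall t, N (g1 t, g2 t) = N (z1,z2)) ->
  (forall eps del, 0 < eps -> 0 < del -> exists t, 0 < Rabs t < del /\
     Rabs (g1 t - z1 - t*d1) + Rabs (g2 t - z2 - t*d2) <= eps * Rabs t) ->
  a*d1 + b*d2 = 0.
Proof.
intros HN HF Hg Ho. destruct (Req_dec (a*d1+b*d2) 0) as [E|E]; auto. exfalso.
set (v := Rabs (a*d1+b*d2)). assert (Hv : 0 < v) by (apply Rabs_pos_lt; auto).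
set (A := Rabs a + Rabs b). set (M := Rabs d1 + Rabs d2 + 1).
assert (HA : 0 <= A) by (unfold A; pose proof (Rabs_pos a); pose proof (Rabs_pos b); lra).
assert (HM : 1 <= M) by (unfold M; pose proof (Rabs_pos d1); pose proof (Rabs_pos d2); lra).
set (e1 := Rmin 1 (v/(2*(A+M)))).
assert (He1 : 0 < e1) by (unfold e1; apply Rmin_pos; [lra| apply Rdiv_lt_0_compat; lra]).
assert (He11 : e1 <= 1) by apply Rmin_l.
assert (He12 : e1 * (2*(A+M)) <= v).
{ pose proof (Rmin_r 1 (v/(2*(A+M)))). fold e1 in H.
  apply Rmult_le_compat_r with (r := 2*(A+M)) in H; [|lra].
  replace (v / (2 * (A + M)) * (2 * (A + M))) with v in H by (field; lra). lra. }
destruct (HF e1 He1) as [del2 [Hdel2 Hd]].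
destruct (Ho e1 (del2/M) He1 ltac:(apply Rdiv_lt_0_compat; lra)) as [t [[Ht0 Ht] Het]].
set (h1 := g1 t - z1). set (h2 := g2 t - z2).
set (f1 := g1 t - z1 - t*d1) in *. set (f2 := g2 t - z2 - t*d2) in *.
assert (Hh1 : Rabs h1 <= Rabs t * Rabs d1 + Rabs f1).
{ replace h1 with (t*d1 + f1) by (unfold h1, f1; ring). rewrite <- Rabs_mult. apply Rabs_triang. }
assert (Hh2 : Rabs h2 <= Rabs t * Rabs d2 + Rabs f2).
{ replace h2 with (t*d2 + f2) by (unfold h2, f2; ring). rewrite <- Rabs_mult. apply Rabs_triang. }
assert (Hn : Rabs h1 + Rabs h2 <= Rabs t * M).
{ unfold M. nra. }
assert (HtM : Rabs t * M < del2).
{ apply Rmult_lt_compat_r with (r := M) in Ht; [|lra].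
  replace (del2 / M * M) with del2 in Ht by (field; lra). lra. }
specialize (Hd h1 h2 ltac:(lra)).
replace (z1 + h1, z2 + h2) with (g1 t, g2 t) in Hd by (unfold h1, h2; f_equal; ring).
rewrite Hg in Hd. replace (N (z1, z2) - N (z1, z2) - (a * h1 + b * h2)) with (- (a*h1+b*h2)) in Hd by ring.
rewrite Rabs_Ropp in Hd.
assert (Hl : a*h1+b*h2 = t*(a*d1+b*d2) + (a*f1+b*f2)) by (unfold h1,h2,f1,f2; ring).
pose proof (lin_bound a b f1 f2). fold A in H.
assert (Hv2 : Rabs t * v <= Rabs (a*h1+b*h2) + Rabs (a*f1+b*f2)).
{ unfold v. rewrite <- Rabs_mult. rewrite Hl.
  pose proof (Rabs_triang (t * (a * d1 + b * d2) + (a * f1 + b * f2)) (-(a * f1 + b * f2))).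
  rewrite Rabs_Ropp in H0. replace (t * (a * d1 + b * d2) + (a * f1 + b * f2) + - (a * f1 + b * f2)) with (t * (a * d1 + b * d2)) in H0 by ring. lra. }
assert (Rabs (a*f1+b*f2) <= A * (e1 * Rabs t)).
{ eapply Rle_trans. exact H. apply Rmult_le_compat_l; auto. }
assert (e1 * (Rabs h1 + Rabs h2) <= e1 * (Rabs t * M)) by (apply Rmult_le_compat_l; lra).
assert (Rabs t * v <= Rabs t * (e1 * (A + M))) by nra.
assert (Rabs t * (e1 * (2*(A + M))) <= Rabs t * v) by (apply Rmult_le_compat_l; lra).
assert (0 < Rabs t * (e1 * (A + M))).
{ apply Rmult_lt_0_compat; auto. apply Rmult_lt_0_compat; lra. }
nra.
Qed.


Lemma par_lemma a b p1 p2 m1 m2 : (a <> 0 \/ b <> 0) -> a*p1+b*p2 = 0 -> a*m1+b*m2 = 0 ->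
  m1*p2 - m2*p1 = 0.
Proof. intros [Ha|Hb] H1 H2.
- apply (Rmult_eq_reg_l a); auto. replace (a*(m1*p2-m2*p1)) with ((a*m1)*p2 - m2*(a*p1)) by ring.
  replace (a*m1) with (-(b*m2)) by lra. replace (a*p1) with (-(b*p2)) by lra. ring.
- apply (Rmult_eq_reg_l b); auto. replace (b*(m1*p2-m2*p1)) with (m1*(b*p2) - (b*m2)*p1) by ring.
  replace (b*m2) with (-(a*m1)) by lra. replace (b*p2) with (-(a*p1)) by lra. ring.
Qed.

Lemma dir_eq N a b z1 z2 p1 p2 m1 m2 : is_norm N -> a*z1+b*z2 = 1 -> a*p1+b*p2 = 0 -> a*m1+b*m2 = 0 ->
  N (p1,p2) = 1 -> N (m1,m2) = 1 -> 0 < z1*m2 - z2*m1 -> 0 < z1*p2 - z2*p1 -> m1 = p1 /\ m2 = p2.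
Proof. intros HN Hz Hp Hm Np Nm Dm Dp.
assert (Hab : a <> 0 \/ b <> 0).
{ destruct (Req_dec a 0); [right|left; auto]. intro; subst; lra. }
pose proof (par_lemma _ _ _ _ _ _ Hab Hp Hm) as Hd.
assert (Hc : exists c, m1 = c*p1 /\ m2 = c*p2).
{ destruct (Req_dec p1 0) as [Hp1|Hp1].
  - destruct (Req_dec p2 0) as [Hp2|Hp2].
    { rewrite Hp1, Hp2, N00 in Np; auto; lra. }
    exists (m2/p2). split.
    + rewrite Hp1 in *. rewrite Rmult_0_r. apply (Rmult_eq_reg_r p2); auto. nra.
    + field; auto.
  - exists (m1/p1). split.
    + field; auto.
    + apply (Rmult_eq_reg_r p1); auto. field_simplify; auto. nra. }
destruct Hc as [c [E1 E2]].
rewrite E1, E2, Nscal, Np in Nm; auto.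
assert (0 < c*(z1*p2-z2*p1)) by (rewrite E1, E2 in Dm; nra).
assert (0 < c) by nra. rewrite Rabs_pos_eq in Nm by lra. assert (c = 1) by lra. rewrite E1, E2, H1; split; ring.
Qed.


Lemma sign_choice a r : 0 < r -> exists s, Rabs s = r /\ Rabs a / r * s = a.
Proof. intros Hr. destruct (Rle_dec 0 a).
- exists r. rewrite Rabs_pos_eq by lra. rewrite (Rabs_pos_eq a) by lra. split; auto. field; lra.
- exists (-r). rewrite Rabs_Ropp, Rabs_pos_eq by lra. rewrite (Rabs_left a) by lra. split; auto. field; lra.
Qed.

Lemma up_est N x1 x2 d1 d2 c eps del : is_norm N -> N (x1,x2) = 1 -> 0 <= eps ->
  (forall t, Rabs t < del -> Rabs (N (x1+t*d1,x2+t*d2) - N (x1+0*d1,x2+0*d2) - c*t) <= eps * Rabs t) ->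
  forall a b, Rabs a + Rabs b < Rmin 1 del ->
  N (x1 + (a*x1+b*d1), x2 + (a*x2+b*d2)) <= 1 + a + c*b + eps*(Rabs a + Rabs b).
Proof.
intros HN Hx He Hphi a b Hr.
replace (x1+0*d1,x2+0*d2) with (x1,x2) in Hphi by (f_equal; ring). rewrite Hx in Hphi.
pose proof (Rabs_pos a) as Pa; pose proof (Rabs_pos b) as Pb.
set (r := Rabs a + Rabs b) in *.
pose proof (Rmin_l 1 del). pose proof (Rmin_r 1 del).
destruct (Req_dec r 0) as [Hr0|Hr0].
{ assert (a = 0) by (destruct Pa as [Pa|Pa]; [unfold r in Hr0; lra| apply eq_sym, Rabs_eq_0 in Pa; auto]).
  assert (b = 0) by (destruct Pb as [Pb|Pb]; [unfold r in Hr0; lra| apply eq_sym, Rabs_eq_0 in Pb; auto]).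
  subst a b. replace (x1 + (0 * x1 + 0 * d1), x2 + (0 * x2 + 0 * d2)) with (x1,x2) by (f_equal; ring).
  rewrite Hx, Hr0. lra. }
assert (Hr1 : 0 < r) by (unfold r in *; lra).
destruct (sign_choice a r Hr1) as [sa [Hsa Hsa2]].
destruct (sign_choice b r Hr1) as [sb [Hsb Hsb2]].
set (p := Rabs a / r) in *. set (q := Rabs b / r) in *.
assert (Hpq : p + q = 1) by (unfold p, q, r in *; field; lra).
assert (Hp : 0 <= p) by (unfold p; apply Rdiv_le_0_compat; lra).
assert (Hq : 0 <= q) by (unfold q; apply Rdiv_le_0_compat; lra).
pose proof (Ncomb N HN p q (x1+sa*x1) (x2+sa*x2) (x1+sb*d1) (x2+sb*d2) Hp Hq) as Hc.
replace (p * (x1 + sa * x1) + q * (x1 + sb * d1), p * (x2 + sa * x2) + q * (x2 + sb * d2))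
  with (x1 + (a*x1+b*d1), x2 + (a*x2+b*d2)) in Hc.
2:{ f_equal.
  - replace (p * (x1 + sa * x1) + q * (x1 + sb * d1)) with ((p+q)*x1 + (p*sa)*x1 + (q*sb)*d1) by ring.
    rewrite Hpq, Hsa2, Hsb2. ring.
  - replace (p * (x2 + sa * x2) + q * (x2 + sb * d2)) with ((p+q)*x2 + (p*sa)*x2 + (q*sb)*d2) by ring.
    rewrite Hpq, Hsa2, Hsb2. ring. }
replace (x1 + sa*x1, x2+sa*x2) with ((1+sa)*x1, (1+sa)*x2) in Hc by (f_equal; ring).
rewrite Nscal, Hx in Hc by auto.
assert (Hsa1 : Rabs sa < 1) by lra.
rewrite (Rabs_pos_eq (1+sa)) in Hc by (apply Rabs_def2 in Hsa1; lra).
assert (Hsbd : Rabs sb < del) by lra.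
specialize (Hphi sb Hsbd). apply Rabs_le_inv in Hphi. destruct Hphi as [_ Hphi].
rewrite Hsb in Hphi.
assert (q * N (x1 + sb * d1, x2 + sb * d2) <= q * (1 + c*sb + eps * r)) by (apply Rmult_le_compat_l; lra).
assert (q * (eps * r) <= eps * r).
{ assert (q <= 1) by lra. assert (0 <= eps * r) by (apply Rmult_le_pos; lra). nra. }
replace (p * ((1 + sa) * 1)) with (p + p*sa) in Hc by ring.
replace (q * (1 + c * sb + eps * r)) with (q + c * (q*sb) + q*(eps*r)) in H1 by ring.
rewrite Hsa2 in Hc. rewrite Hsb2 in H1. lra.
Qed.

Lemma convex_Fdiff N x1 x2 d1 d2 c : is_norm N -> N (x1,x2) = 1 -> x1*d2 - x2*d1 <> 0 ->
  D1 (fun t => N (x1+t*d1, x2+t*d2)) c ->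
  Fdiff N x1 x2 ((d2 - c*x2)/(x1*d2 - x2*d1)) ((c*x1 - d1)/(x1*d2 - x2*d1)).
Proof.
intros HN Hx HD Hphi. set (D := x1*d2 - x2*d1) in *.
intros eps Heps.
pose proof (Rabs_pos_lt D HD) as HaD.
set (C0 := (Rabs d1 + Rabs d2 + Rabs x1 + Rabs x2) / Rabs D).
assert (HC0 : 0 <= C0) by (unfold C0; apply Rdiv_le_0_compat; [pose proof (Rabs_pos d1); pose proof (Rabs_pos d2); pose proof (Rabs_pos x1); pose proof (Rabs_pos x2); lra | lra]).
set (C := C0 + 1).
destruct (Hphi (eps / C) ltac:(apply Rdiv_lt_0_compat; unfold C; lra)) as [del [Hdel Hd]].
simpl in Hd.
assert (Hm : 0 < Rmin 1 del) by (apply Rmin_pos; lra).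
exists (Rmin 1 del / C). split. apply Rdiv_lt_0_compat; unfold C; lra.
intros h1 h2 Hh.
set (a := (h1*d2 - h2*d1)/D). set (b := (x1*h2 - x2*h1)/D).
assert (Eh1 : h1 = a*x1 + b*d1) by (unfold a, b, D in *; field; auto).
assert (Eh2 : h2 = a*x2 + b*d2) by (unfold a, b, D in *; field; auto).
assert (Hr : Rabs a + Rabs b <= C0 * (Rabs h1 + Rabs h2)).
{ pose proof (lin_bound d2 (-d1) h1 h2) as B1. pose proof (lin_bound (-x2) x1 h1 h2) as B2.
  rewrite Rabs_Ropp in B1, B2.
  assert (Ea : Rabs a = Rabs (d2*h1 + -d1*h2) / Rabs D) by (unfold a; rewrite Rabs_div by auto; f_equal; f_equal; ring).
  assert (Eb : Rabs b = Rabs (-x2*h1 + x1*h2) / Rabs D) by (unfold b; rewrite Rabs_div by auto; f_equal; f_equal; ring).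
  rewrite Ea, Eb. unfold C0. apply (Rmult_le_reg_r (Rabs D)); auto.
  field_simplify; try lra. }
set (r := Rabs a + Rabs b) in *.
assert (Hn0 : 0 <= Rabs h1 + Rabs h2) by (pose proof (Rabs_pos h1); pose proof (Rabs_pos h2); lra).
assert (Hrlt : r < Rmin 1 del).
{ apply Rmult_lt_compat_l with (r := C) in Hh; [|unfold C; lra].
  replace (C * (Rmin 1 del / C)) with (Rmin 1 del) in Hh by (field; unfold C; lra).
  assert (C0 * (Rabs h1 + Rabs h2) <= C * (Rabs h1 + Rabs h2)) by (unfold C; nra). lra. }
assert (He' : 0 <= eps / C) by (apply Rdiv_le_0_compat; unfold C; lra).
pose proof (up_est N x1 x2 d1 d2 c (eps/C) del HN Hx He' Hd a b Hrlt) as U1.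
assert (Hrlt' : Rabs (-a) + Rabs (-b) < Rmin 1 del) by (rewrite !Rabs_Ropp; exact Hrlt).
pose proof (up_est N x1 x2 d1 d2 c (eps/C) del HN Hx He' Hd (-a) (-b) Hrlt') as U2.
rewrite !Rabs_Ropp in U2. fold r in U1, U2.
pose proof (Ntri N HN (x1 + (a*x1+b*d1)) (x2 + (a*x2+b*d2)) (x1 + (-a*x1 + -b*d1)) (x2 + (-a*x2 + -b*d2))) as T.
replace (x1 + (a * x1 + b * d1) + (x1 + (- a * x1 + - b * d1)), x2 + (a * x2 + b * d2) + (x2 + (- a * x2 + - b * d2)))
  with (2*x1, 2*x2) in T by (f_equal; ring).
rewrite Nscal, Hx, Rabs_pos_eq in T by (auto; lra).
replace (x1 + h1, x2 + h2) with (x1 + (a*x1+b*d1), x2 + (a*x2+b*d2)) by (rewrite Eh1, Eh2; reflexivity).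
rewrite Hx.
replace ((d2 - c * x2) / D * h1 + (c * x1 - d1) / D * h2) with (a + c*b) by (unfold a, b, D in *; field; auto).
assert (eps / C * r <= eps * (Rabs h1 + Rabs h2)).
{ apply Rle_trans with (eps / C * (C * (Rabs h1 + Rabs h2))).
  - apply Rmult_le_compat_l; auto. unfold C; nra.
  - right. field. unfold C; lra. }
apply Rabs_le. lra.
Qed.

Lemma Fdiff_D1 N x1 x2 d1 d2 a b : Fdiff N x1 x2 a b -> D1 (fun t => N (x1+t*d1, x2+t*d2)) (a*d1+b*d2).
Proof.
intros HF eps Heps. set (M := Rabs d1 + Rabs d2 + 1).
assert (HM : 1 <= M) by (unfold M; pose proof (Rabs_pos d1); pose proof (Rabs_pos d2); lra).
destruct (HF (eps/M) ltac:(apply Rdiv_lt_0_compat; lra)) as [del [Hdel Hd]].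
exists (del/M). split. apply Rdiv_lt_0_compat; lra.
intros t Ht. simpl. replace (x1 + 0*d1, x2 + 0*d2) with (x1,x2) by (f_equal; ring).
specialize (Hd (t*d1) (t*d2)). rewrite !Rabs_mult in Hd.
assert (Hs : Rabs t * Rabs d1 + Rabs t * Rabs d2 <= Rabs t * M) by (unfold M; pose proof (Rabs_pos t); nra).
assert (Rabs t * M < del).
{ apply Rmult_lt_compat_r with (r := M) in Ht; [|lra].
  replace (del / M * M) with del in Ht by (field; lra). lra. }
specialize (Hd ltac:(lra)).
replace ((a*d1+b*d2)*t) with (a*(t*d1)+b*(t*d2)) by ring.
eapply Rle_trans. exact Hd.
apply Rle_trans with (eps / M * (Rabs t * M)).
- apply Rmult_le_compat_l; [apply Rdiv_le_0_compat; lra| lra].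
- right. field. lra.
Qed.


Lemma Gphi N (g1 g2 : R -> R) y1 y2 x1 x2 d1 d2 lam c : is_norm N -> 0 < lam -> N (x1,x2) = 1 ->
  g1 0 = y1 + lam*x1 -> g2 0 = y2 + lam*x2 ->
  (forall eps, 0 < eps -> exists del, 0 < del /\ forall t, Rabs t < del ->
     Rabs (g1 t - (y1+lam*x1) - t*d1) + Rabs (g2 t - (y2+lam*x2) - t*d2) <= eps * Rabs t) ->
  (D1 (fun t => N (g1 t - y1, g2 t - y2)) c <-> D1 (fun s => N (x1 + s*d1, x2 + s*d2)) c).
Proof.
intros HN Hl Hx H10 H20 Ho.
set (K := KN N).
assert (HK : 0 <= K) by (unfold K, KN; pose proof (Nnonneg N HN 1 0); pose proof (Nnonneg N HN 0 1); lra).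
assert (Key : forall t, Rabs (N (g1 t - y1, g2 t - y2) - lam * N (x1 + t/lam*d1, x2 + t/lam*d2)) <=
   K * (Rabs (g1 t - (y1+lam*x1) - t*d1) + Rabs (g2 t - (y2+lam*x2) - t*d2))).
{ intros t. replace (lam * N (x1 + t/lam*d1, x2 + t/lam*d2)) with (N (lam*x1 + t*d1, lam*x2+t*d2)).
  2:{ replace (lam*x1 + t*d1, lam*x2+t*d2) with (lam*(x1 + t/lam*d1), lam*(x2 + t/lam*d2)) by (f_equal; field; lra).
      rewrite Nscal, Rabs_pos_eq by (auto; lra). reflexivity. }
  eapply Rle_trans. apply Ndiff; auto. fold K. right. f_equal. f_equal; f_equal; ring. }
assert (G0 : N (g1 0 - y1, g2 0 - y2) = lam).
{ rewrite H10, H20. replace (y1 + lam * x1 - y1, y2 + lam * x2 - y2) with (lam*x1, lam*x2) by (f_equal; ring).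
  rewrite Nscal, Hx, Rabs_pos_eq by (auto; lra). ring. }
assert (P0 : N (x1 + 0*d1, x2 + 0*d2) = 1) by (replace (x1 + 0*d1, x2 + 0*d2) with (x1,x2) by (f_equal; ring); auto).
split.
- intros HG eps Heps. simpl. rewrite P0.
  destruct (HG (eps/2) ltac:(lra)) as [del1 [Hd1 HG1]]. simpl in HG1. rewrite G0 in HG1.
  destruct (Ho (eps/(2*(K+1))) ltac:(apply Rdiv_lt_0_compat; lra)) as [del2 [Hd2 Ho2]].
  exists (Rmin del1 del2 / lam). split. apply Rdiv_lt_0_compat; auto; apply Rmin_pos; lra.
  intros s Hs. set (t := lam * s).
  assert (Ht : Rabs t < Rmin del1 del2).
  { unfold t. rewrite Rabs_mult, (Rabs_pos_eq lam) by lra.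
    apply Rmult_lt_compat_l with (r := lam) in Hs; auto. replace (lam * (Rmin del1 del2 / lam)) with (Rmin del1 del2) in Hs by (field; lra). lra. }
  pose proof (Rmin_l del1 del2); pose proof (Rmin_r del1 del2).
  specialize (HG1 t ltac:(lra)). specialize (Ho2 t ltac:(lra)). specialize (Key t).
  replace (t/lam) with s in Key by (unfold t; field; lra).
  assert (Hts : Rabs t = lam * Rabs s) by (unfold t; rewrite Rabs_mult, Rabs_pos_eq by lra; auto).
  apply (Rmult_le_reg_l lam); auto.
  replace (lam * Rabs (N (x1 + s * d1, x2 + s * d2) - 1 - c * s)) with
    (Rabs (lam * N (x1 + s * d1, x2 + s * d2) - lam - c * t)).
  2:{ replace (lam * N (x1 + s * d1, x2 + s * d2) - lam - c * t) with (lam * (N (x1 + s * d1, x2 + s * d2) - 1 - c * s)) by (unfold t; ring). rewrite Rabs_mult, (Rabs_pos_eq lam) by lra. reflexivity. }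
  set (Gt := N (g1 t - y1, g2 t - y2)) in *. set (Pt := N (x1 + s * d1, x2 + s * d2)) in *.
  set (E := Rabs (g1 t - (y1 + lam * x1) - t * d1) + Rabs (g2 t - (y2 + lam * x2) - t * d2)) in *.
  assert (K * E <= eps/2 * Rabs t).
  { apply Rle_trans with (K * (eps / (2 * (K + 1)) * Rabs t)). apply Rmult_le_compat_l; auto.
    apply Rle_trans with ((K+1) * (eps / (2 * (K + 1)) * Rabs t)).
    - apply Rmult_le_compat_r; [|lra]. apply Rmult_le_pos; [apply Rdiv_le_0_compat; lra| apply Rabs_pos].
    - right. field. lra. }
  pose proof (Rabs_triang (Gt - lam - c*t) (lam*Pt - Gt)) as TT.
  replace (Gt - lam - c * t + (lam * Pt - Gt)) with (lam * Pt - lam - c * t) in TT by ring.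
  rewrite Rabs_minus_sym in Key. rewrite Hts in *. lra.
- intros HP eps Heps. simpl. rewrite G0.
  destruct (HP (eps/2) ltac:(lra)) as [del1 [Hd1 HP1]]. simpl in HP1. rewrite P0 in HP1.
  destruct (Ho (eps/(2*(K+1))) ltac:(apply Rdiv_lt_0_compat; lra)) as [del2 [Hd2 Ho2]].
  exists (Rmin (lam*del1) del2). split. apply Rmin_pos; nra.
  intros t Ht. pose proof (Rmin_l (lam*del1) del2); pose proof (Rmin_r (lam*del1) del2).
  set (s := t/lam).
  assert (Hts : Rabs t = lam * Rabs s) by (unfold s; rewrite Rabs_div, (Rabs_pos_eq lam) by lra; field; lra).
  assert (Hs : Rabs s < del1) by nra.
  specialize (HP1 s Hs). specialize (Ho2 t ltac:(lra)). specialize (Key t). fold s in Key.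
  set (Gt := N (g1 t - y1, g2 t - y2)) in *. set (Pt := N (x1 + s * d1, x2 + s * d2)) in *.
  set (E := Rabs (g1 t - (y1 + lam * x1) - t * d1) + Rabs (g2 t - (y2 + lam * x2) - t * d2)) in *.
  assert (K * E <= eps/2 * Rabs t).
  { apply Rle_trans with (K * (eps / (2 * (K + 1)) * Rabs t)). apply Rmult_le_compat_l; auto.
    apply Rle_trans with ((K+1) * (eps / (2 * (K + 1)) * Rabs t)).
    - apply Rmult_le_compat_r; [|lra]. apply Rmult_le_pos; [apply Rdiv_le_0_compat; lra| apply Rabs_pos].
    - right. field. lra. }
  assert (Rabs (lam*Pt - lam - c*t) <= lam * (eps/2 * Rabs s)).
  { replace (lam*Pt - lam - c*t) with (lam * (Pt - 1 - c*s)) by (unfold s; field; lra).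
    rewrite Rabs_mult, Rabs_pos_eq by lra. apply Rmult_le_compat_l; lra. }
  pose proof (Rabs_triang (Gt - lam*Pt) (lam*Pt - lam - c*t)) as TT.
  replace (Gt - lam * Pt + (lam * Pt - lam - c * t)) with (Gt - lam - c*t) in TT by ring.
  rewrite Hts in *. nra.
Qed.


Lemma D1_ext f f' c : (forall t, f t = f' t) -> (D1 f c <-> D1 f' c).
Proof. intros H. unfold D1. split; intros HH eps Heps; destruct (HH eps Heps) as [del [Hd Hf]];
  exists del; split; auto; intros t Ht; specialize (Hf t Ht); rewrite ?H in *; auto; rewrite <- !H; auto. Qed.

Theorem proposition2 :
  forall (N : R * R -> R), is_norm N -> strictly_convex N ->
  forall (x y z : R * R) (lam : R),
    N x = 1 -> N y = 1 -> N z = 1 ->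
    0 < lam < 2 ->
    z = plus y (scal lam x) ->
    ex_filterdiff N (locally z) ->
    forall (L : R) (g : R -> R * R), natural_param N z L g ->
    (ex_filterdiff N (locally x) <-> ex_derive (fun t => N (minus (g t) y)) 0).
Proof.
intros N HN HSC [x1 x2] [y1 y2] [z1 z2] lam Hx Hy Hz Hlam Hzyx Hdz L g Hnp.
change (plus (y1,y2) (scal lam (x1,x2))) with (y1 + lam*x1, y2 + lam*x2) in Hzyx.
injection Hzyx as E1 E2.
apply fd_to_F in Hdz. destruct Hdz as [a [b HF]].
destruct Hnp as [HL [Hg0 [Hper [Hn1 [Hsurj [Hinj [Hlen Hder]]]]]]].
set (g1 := fun t => fst (g t)). set (g2 := fun t => snd (g t)).
assert (Hn1' : forall t, N (g1 t, g2 t) = N (z1,z2)).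
{ intros t. unfold g1, g2. rewrite <- surjective_pairing, Hn1, Hz. auto. }
assert (Hlz : a*z1 + b*z2 = 1).
{ pose proof (subgrad N z1 z2 a b HN HF z1 z2) as S1.
  pose proof (subgrad N z1 z2 a b HN HF (-z1/2) (-z2/2)) as S2.
  replace (z1+z1, z2+z2) with (2*z1, 2*z2) in S1 by (f_equal; ring).
  replace (z1 + -z1/2, z2 + -z2/2) with (/2*z1, /2*z2) in S2 by (f_equal; field).
  rewrite Nscal, Hz, Rabs_pos_eq in S1, S2 by (auto; lra). lra. }
destruct (Hder 0) as [[m1 m2] [[p1 p2] [Hl [Hr [Nm [Np [Dm Dp]]]]]]].
rewrite Hg0 in Dm, Dp. unfold det in Dm, Dp. simpl in Dm, Dp.
pose proof (right_o g (p1,p2) Hr) as Ro. pose proof (left_o g (m1,m2) Hl) as Lo.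
rewrite Hg0 in Ro, Lo. simpl in Ro, Lo.
assert (Kp : a*p1 + b*p2 = 0).
{ apply (kernel N z1 z2 a b g1 g2 p1 p2 HN HF Hn1'). intros eps del He Hd.
  destruct (Ro eps He) as [d1 [Hd1 R1]]. exists (Rmin del d1 / 2).
  pose proof (Rmin_l del d1); pose proof (Rmin_r del d1). pose proof (Rmin_pos del d1 Hd Hd1).
  split. rewrite Rabs_pos_eq; lra. unfold g1, g2. apply R1. lra. }
assert (Km : a*(-m1) + b*(-m2) = 0).
{ apply (kernel N z1 z2 a b (fun s => g1 (-s)) (fun s => g2 (-s)) (-m1) (-m2) HN HF (fun s => Hn1' (-s))).
  intros eps del He Hd.
  destruct (Lo eps He) as [d1 [Hd1 L1]]. exists (Rmin del d1 / 2).
  pose proof (Rmin_l del d1); pose proof (Rmin_r del d1). pose proof (Rmin_pos del d1 Hd Hd1).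
  split. rewrite Rabs_pos_eq; lra.
  specialize (L1 (- (Rmin del d1 / 2)) ltac:(lra)). rewrite Rabs_Ropp in L1.
  unfold g1, g2. replace (Rmin del d1 / 2 * - m1) with (- (Rmin del d1 / 2) * m1) by ring.
  replace (Rmin del d1 / 2 * - m2) with (- (Rmin del d1 / 2) * m2) by ring. exact L1. }
assert (Km' : a*m1 + b*m2 = 0) by lra.
destruct (dir_eq N a b z1 z2 p1 p2 m1 m2 HN Hlz Kp Km' Np Nm Dm Dp) as [Em1 Em2].
subst m1 m2.
assert (Ho : forall eps, 0 < eps -> exists del, 0 < del /\ forall t, Rabs t < del ->
     Rabs (g1 t - z1 - t*p1) + Rabs (g2 t - z2 - t*p2) <= eps * Rabs t).
{ intros eps He. destruct (Ro eps He) as [d1 [Hd1 R1]]. destruct (Lo eps He) as [d2 [Hd2 L2]].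
  exists (Rmin d1 d2). split. apply Rmin_pos; auto.
  pose proof (Rmin_l d1 d2); pose proof (Rmin_r d1 d2).
  intros t Ht. destruct (Rtotal_order t 0) as [Ht0|[Ht0|Ht0]].
  - apply L2. apply Rabs_def2 in Ht. lra.
  - subst t. unfold g1, g2. rewrite Hg0. simpl. rewrite !Rmult_0_l, Rabs_R0.
    replace (z1 - z1 - 0) with 0 by ring. replace (z2 - z2 - 0) with 0 by ring. rewrite Rabs_R0. lra.
  - apply R1. apply Rabs_def2 in Ht. lra. }
assert (Hlx : a*x1 + b*x2 <> 0).
{ intros Hlx0. assert (Hzy : (z1,z2) = (y1,y2)).
  { apply HSC; auto. intros s Hs.
    change (plus (scal (1 - s) (z1, z2)) (scal s (y1, y2))) with ((1-s)*z1 + s*y1, (1-s)*z2 + s*y2).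
    apply Rle_antisym.
    - eapply Rle_trans. apply Ncomb; auto; lra. rewrite Hz, Hy. lra.
    - pose proof (subgrad N z1 z2 a b HN HF (s*(y1-z1)) (s*(y2-z2))) as S.
      replace (z1 + s*(y1-z1), z2 + s*(y2-z2)) with ((1-s)*z1 + s*y1, (1-s)*z2 + s*y2) in S by (f_equal; ring).
      rewrite Hz in S. replace (a * (s * (y1 - z1)) + b * (s * (y2 - z2))) with (-(s*lam)*(a*x1+b*x2)) in S by (rewrite E1, E2; ring).
      rewrite Hlx0 in S. lra. }
  injection Hzy as F1 F2. rewrite E1 in F1. rewrite E2 in F2.
  assert (lam*x1 = 0) by lra. assert (lam*x2 = 0) by lra.
  pose proof (Nscal N HN lam x1 x2). rewrite H, H0, Hx, N00, Rabs_pos_eq in H1 by (auto; lra). lra. }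
assert (HD : x1*p2 - x2*p1 <> 0).
{ intros HD0. apply Hlx.
  assert ((a*x1+b*x2)*p1 = 0) by (replace ((a*x1+b*x2)*p1) with (x1*(a*p1+b*p2) - b*(x1*p2 - x2*p1)) by ring; rewrite Kp, HD0; ring).
  assert ((a*x1+b*x2)*p2 = 0) by (replace ((a*x1+b*x2)*p2) with (x2*(a*p1+b*p2) + a*(x1*p2 - x2*p1)) by ring; rewrite Kp, HD0; ring).
  destruct (Req_dec p1 0).
  - destruct (Req_dec p2 0).
    + subst. rewrite N00 in Np; auto. lra.
    + apply Rmult_integral in H0. destruct H0; auto. contradiction.
  - apply Rmult_integral in H. destruct H; auto. contradiction. }
subst z1 z2.
assert (Hfe : forall t, N (minus (g t) (y1,y2)) = N (g1 t - y1, g2 t - y2)).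
{ intros t. unfold g1, g2. destruct (g t); reflexivity. }
assert (Hg10 : g1 0 = y1 + lam*x1) by (unfold g1; rewrite Hg0; reflexivity).
assert (Hg20 : g2 0 = y2 + lam*x2) by (unfold g2; rewrite Hg0; reflexivity).
rewrite exd_D1. split.
- intros Hdx. apply fd_to_F in Hdx. destruct Hdx as [a' [b' HF']].
  pose proof (Fdiff_D1 N x1 x2 p1 p2 a' b' HF') as P.
  exists (a'*p1+b'*p2). apply (D1_ext _ _ _ Hfe).
  apply (Gphi N g1 g2 y1 y2 x1 x2 p1 p2 lam _ HN ltac:(lra) Hx Hg10 Hg20 Ho). exact P.
- intros [c Hc]. apply (D1_ext _ _ _ Hfe) in Hc.
  apply (Gphi N g1 g2 y1 y2 x1 x2 p1 p2 lam _ HN ltac:(lra) Hx Hg10 Hg20 Ho) in Hc.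
  eapply F_to_fd. apply convex_Fdiff; eauto.
Qed.
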